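(* Assume $\lambda_A>0$ (the dataset need not be balanced). Then for every $\theta\in\mathbb R^d$, $$w(\theta)\le 2f_d(\theta)+\frac{\gamma^2}{N}\Big((\phi(s_{N+1})^T(\theta-\theta^* ))^2-(\phi(s_1)^T(\theta-\theta^* ))^2\Big)\le\Big(2+\frac{\gamma^2}{N\lambda_A}\Big)f_d(\theta).$$
   Context: Finite-sample setting. Let $\mathcal S$ be a finite state space, $\phi:\mathcal S\to\mathbb R^d$ a feature map with $\|\phi(s)\|_2\le 1$ for all $s$, $r:\mathcal S\times\mathcal S\to\mathbb R$ a reward function and $\gamma\in[0,1)$. For a pair of states $(s,s')$ and $\theta\in\mathbb R^d$ let $g_{s,s'}(\theta)=(r(s,s')+\gamma\phi(s')^T\theta-\phi(s)^T\theta)\phi(s)$. A dataset is a state trajectory $s_1,\dots,s_{N+1}$, giving the $N$ pairs $(s_t,s_{t+1})$, $t=1,\dots,N$. Let $A_d=\frac1N\sum_{t=1}^N\phi(s_t)(\phi(s_t)-\gamma\phi(s_{t+1}))^T$ and $b_d=\frac1N\sum_{t=1}^N r(s_t,s_{t+1})\phi(s_t)$. Assume $A_d$ is nonsingular and let $\theta^*=A_d^{-1}b_d$. Let $\lambda_A$ denote the minimum eigenvalue of $(A_d+A_d^T)/2$. Define $f_d(\theta)=(\theta-\theta^* )^TA_d(\theta-\theta^* )$ and $w(\theta)=\frac1N\sum_{t=1}^N\|g_{s_t,s_{t+1}}(\theta)-g_{s_t,s_{t+1}}(\theta^* )\|^2$. *)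

(* Defs.v *)
From HB Require Import structures.
From mathcomp Require Import all_boot all_order all_algebra.
Set Implicit Arguments. Unset Strict Implicit. Unset Printing Implicit Defensive.
Import Order.TTheory GRing.Theory Num.Theory.
Local Open Scope ring_scope.

Section TD.
Variables (R : rcfType) (S : finType) (d : nat).

Definition dotv (u v : 'cV[R]_d) : R := (u^T *m v) ord0 ord0.
Definition sqnorm (u : 'cV[R]_d) : R := dotv u u.

Definition gTD (phi : S -> 'cV[R]_d) (r : S -> S -> R) (gamma : R)
  (s s' : S) (theta : 'cV[R]_d) : 'cV[R]_d :=
  (r s s' + gamma * dotv (phi s') theta - dotv (phi s) theta) *: phi s.

(* The trajectory is traj 1, ..., traj (N+1); pairs (traj t, traj (t+1)), t = 1..N. *)
Definition A_d (phi : S -> 'cV[R]_d) (gamma : R) (N : nat) (traj : nat -> S)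
  : 'M[R]_d :=
  (N%:R)^-1 *: \sum_(1 <= t < N.+1)
      (phi (traj t) *m (phi (traj t) - gamma *: phi (traj t.+1))^T).

Definition b_d (phi : S -> 'cV[R]_d) (r : S -> S -> R) (N : nat) (traj : nat -> S)
  : 'cV[R]_d :=
  (N%:R)^-1 *: \sum_(1 <= t < N.+1) (r (traj t) (traj t.+1) *: phi (traj t)).

Definition theta_star (phi : S -> 'cV[R]_d) (r : S -> S -> R) (gamma : R)
  (N : nat) (traj : nat -> S) : 'cV[R]_d :=
  invmx (A_d phi gamma N traj) *m b_d phi r N traj.

Definition f_d (phi : S -> 'cV[R]_d) (r : S -> S -> R) (gamma : R)
  (N : nat) (traj : nat -> S) (theta : 'cV[R]_d) : R :=
  let e := theta - theta_star phi r gamma N traj in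
  (e^T *m A_d phi gamma N traj *m e) ord0 ord0.

Definition w_d (phi : S -> 'cV[R]_d) (r : S -> S -> R) (gamma : R)
  (N : nat) (traj : nat -> S) (theta : 'cV[R]_d) : R :=
  (N%:R)^-1 * \sum_(1 <= t < N.+1)
     sqnorm (gTD phi r gamma (traj t) (traj t.+1) theta
             - gTD phi r gamma (traj t) (traj t.+1) (theta_star phi r gamma N traj)).

End TD.

Definition is_min_eigenvalue (R : rcfType) (n : nat) (M : 'M[R]_n) (lam : R) : Prop :=
  eigenvalue M lam /\ (forall b : R, eigenvalue M b -> lam <= b).

(* Main.v *)
Require Import Defs.
From HB Require Import structures.
From mathcomp Require Import all_boot all_order all_algebra.
From mathcomp Require Import complex.
From mathcomp Require Import ring lra.
Import Order.TTheory GRing.Theory Num.Theory.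
Local Open Scope ring_scope.
Local Open Scope sesquilinear_scope.

Section Ray.
Variable R : rcfType.
Local Notation C := (R[i]).
Local Notation f := (real_complex R).

Lemma f_real (x : R) : f x \is Num.real.
Proof.
by case: (lerP 0 x) => h; apply/orP; [left; rewrite ler0c | right; rewrite -(rmorph0 (real_complex R)) lecR ltW].
Qed.

Lemma f_conj (x : R) : (f x)^* = f x.
Proof. exact/conj_Creal/f_real. Qed.

Lemma rayleigh n (M : 'M[R]_n) (lam : R) :
  M^T = M -> (forall b, eigenvalue M b -> lam <= b) ->
  forall x : 'cV[R]_n, lam * (x^T *m x) 0 0 <= (x^T *m M *m x) 0 0.
Proof.
move=> Msym Hmin x.
pose Mc := map_mx f M.
have Mh : Mc \is hermsymmx.
  apply/is_hermitianmxP; rewrite expr0 scale1r; apply/matrixP=> i j.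
  by rewrite !mxE f_conj -[in LHS]Msym mxE.
have /orthomx_spectralP Meq := hermitian_normalmx Mh.
set P := spectralmx Mc in Meq; set D := spectral_diag Mc in Meq.
have Pu : P \is unitarymx := spectral_unitarymx Mc.
have Punit : P \in unitmx := unitarymx_unit Pu.
have Dreal : D \is a realmx := hermitian_spectral_diag_real Mh.
have PM : P *m Mc = diag_mx D *m P.
  by rewrite {1}Meq !mulmxA mulmxV // mul1mx.
have Dge : forall j, f lam <= D 0 j.
  move=> j.
  have Dj : D 0 j \is Num.real by apply: (mxOverP Dreal).
  have fr : f (complex.Re (D 0 j)) = D 0 j by rewrite complexRe; apply: Creal_ReP.
  have eigc : eigenvalue Mc (D 0 j).
    apply/eigenvalueP; exists (row j P).
      by rewrite -row_mul PM row_mul row_diag_mx -scalemxAl -rowE.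
    apply/eqP => h0.
    have := unitarymxP Pu => /(congr1 (row j)).
    rewrite row_mul h0 mul0mx => /matrixP /(_ 0 j).
    by rewrite !mxE eqxx /= => /eqP; rewrite eq_sym oner_eq0.
  have eigr : eigenvalue M (complex.Re (D 0 j)).
    by move: eigc; rewrite -fr /Mc !eigenvalue_root_char -map_char_poly fmorph_root.
  by rewrite -fr lecR; apply: Hmin.
have fE : forall A : 'M[R]_(1,1), f (A 0 0) = (map_mx f A) 0 0 by move=> A; rewrite mxE.
pose u := map_mx f x^T.
have ut : u ^t* = map_mx f x.
  by apply/matrixP=> i j; rewrite !mxE f_conj.
pose v := u *m P ^t*.
have vt : v ^t* = P *m u ^t*.
  by rewrite /v trmx_mul map_mxM trmxCK.
have PtP : P ^t* *m P = 1%:M by rewrite -invmx_unitary // mulVmx.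
have e1 : f ((x^T *m M *m x) 0 0) = (v *m diag_mx D *m v ^t*) 0 0.
  rewrite fE !map_mxM -/u -ut.
  have -> : map_mx f M = P^t* *m diag_mx D *m P by rewrite -invmx_unitary.
  by rewrite vt /v !mulmxA.
have e2 : f ((x^T *m x) 0 0) = (v *m v ^t*) 0 0.
  rewrite fE !map_mxM -/u -ut vt /v.
  by rewrite -mulmxA (mulmxA (P^t*)) PtP mul1mx.
rewrite -lecR.
have -> : f (lam * (x^T *m x) 0 0) = f lam * f ((x^T *m x) 0 0) by rewrite rmorphM.
rewrite e1 e2 mul_mx_diag !mxE mulr_sumr; apply: ler_sum => j _.
rewrite !mxE; set a := \sum_(j0 < n) _.
rewrite mulrAC mulrC; apply: ler_wpM2l => //; apply: mul_conjC_ge0.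
Qed.
End Ray.

Section Aux.
Variables (R : rcfType) (d : nat).
Implicit Types (u v w : 'cV[R]_d).

Lemma dotvE u v : dotv u v = \sum_i u i 0 * v i 0.
Proof. by rewrite /dotv mxE; apply: eq_bigr => i _; rewrite mxE. Qed.

Lemma dotvC u v : dotv u v = dotv v u.
Proof. by rewrite !dotvE; apply: eq_bigr => i _; rewrite mulrC. Qed.

Lemma dotvBr u v w : dotv u (v - w) = dotv u v - dotv u w.
Proof. by rewrite !dotvE -sumrB; apply: eq_bigr => i _; rewrite !mxE mulrBr. Qed.

Lemma dotvBl u v w : dotv (v - w) u = dotv v u - dotv w u.
Proof. by rewrite ![dotv _ u]dotvC dotvBr. Qed.

Lemma dotvZl c u v : dotv (c *: u) v = c * dotv u v.
Proof. by rewrite !dotvE mulr_sumr; apply: eq_bigr => i _; rewrite !mxE mulrA. Qed.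

Lemma sqnormZ c u : sqnorm (c *: u) = c ^+ 2 * sqnorm u.
Proof. by rewrite /sqnorm dotvZl dotvC dotvZl mulrA expr2. Qed.

Lemma sqnorm_ge0 u : 0 <= sqnorm u.
Proof. by rewrite /sqnorm dotvE; apply: sumr_ge0 => i _; rewrite -expr2 sqr_ge0. Qed.

Lemma dot_sq_le u v : sqnorm u <= 1 -> dotv u v ^+ 2 <= sqnorm v.
Proof.
move=> hu; set a := dotv u v.
have h := sqnorm_ge0 (v - a *: u).
have E : sqnorm (v - a *: u) = sqnorm v - 2%:R * a ^+ 2 + a ^+ 2 * sqnorm u.
  rewrite /sqnorm dotvBl !dotvBr !dotvZl [dotv v (a *: u)]dotvC dotvZl.
  rewrite [dotv u (_ *: _)]dotvC dotvZl.
  rewrite /a; ring.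
rewrite E in h.
have : a ^+ 2 * sqnorm u <= a ^+ 2 by rewrite ler_piMr ?sqr_ge0.
have := sqr_ge0 a; lra.
Qed.

Lemma quad_outer (e p q : 'cV[R]_d) :
  (e^T *m (p *m q^T) *m e) 0 0 = dotv p e * dotv q e.
Proof.
have -> : e^T *m (p *m q^T) *m e = (e^T *m p) *m (q^T *m e) by rewrite !mulmxA.
rewrite mxE big_ord1 /dotv; congr (_ * _).
transitivity (((p^T *m e)^T) 0 0); first by rewrite trmx_mul trmxK.
by rewrite mxE.
Qed.

End Aux.

Lemma telesc (R : rcfType) (F : nat -> R) N :
  \sum_(1 <= t < N.+1) F t.+1 + F 1%N = \sum_(1 <= t < N.+1) F t + F N.+1.
Proof.
elim: N => [|N IH]; first by rewrite !big_geq.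
rewrite big_nat_recr // [in RHS]big_nat_recr //=.
rewrite -addrA [F N.+2 + _]addrC addrA IH; ring.
Qed.

Theorem mainTheorem6 (R : rcfType) (S : finType) (d : nat)
  (phi : S -> 'cV[R]_d) (r : S -> S -> R) (gamma : R) (N : nat)
  (traj : nat -> S) (lamA : R) :
  (forall s : S, sqnorm (phi s) <= 1) ->
  0 <= gamma -> gamma < 1 ->
  (0 < N)%N ->
  A_d phi gamma N traj \in unitmx ->
  is_min_eigenvalue ((2%:R)^-1 *: (A_d phi gamma N traj + (A_d phi gamma N traj)^T)) lamA ->
  0 < lamA ->
  forall theta : 'cV[R]_d,
    let e := theta - theta_star phi r gamma N traj in
    let mid := 2%:R * f_d phi r gamma N traj theta
               + gamma ^+ 2 / N%:R
                 * (dotv (phi (traj N.+1)) e ^+ 2 - dotv (phi (traj 1%N)) e ^+ 2) in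
    w_d phi r gamma N traj theta <= mid /\
    mid <= (2%:R + gamma ^+ 2 / (N%:R * lamA)) * f_d phi r gamma N traj theta.
Proof.
move=> hphi g0 g1 N0 _ [_ Hmin] lam0 theta e mid.
set th := theta_star phi r gamma N traj in e mid *.
set A := A_d phi gamma N traj in Hmin *.
pose a t := dotv (phi (traj t)) e.
set k := (N%:R : R)^-1.
have k0 : 0 < k by rewrite invr_gt0 ltr0n.
have fE : f_d phi r gamma N traj theta = k * \sum_(1 <= t < N.+1) (a t * (a t - gamma * a t.+1)).
  rewrite /f_d -/th -/e -/A /A /A_d -/k -scalemxAr -scalemxAl mxE.
  rewrite mulmx_sumr mulmx_suml summxE; congr (_ * _); apply: eq_bigr => t _.
  by rewrite quad_outer dotvBl dotvZl.
have wE : w_d phi r gamma N traj theta <= k * \sum_(1 <= t < N.+1) (gamma * a t.+1 - a t) ^+ 2.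
  rewrite /w_d -/th -/k; apply: ler_wpM2l; first exact: ltW.
  apply: ler_sum => t _.
  have -> : gTD phi r gamma (traj t) (traj t.+1) theta - gTD phi r gamma (traj t) (traj t.+1) th
      = (gamma * a t.+1 - a t) *: phi (traj t).
    rewrite /gTD -scalerBl /a /e !dotvBr; congr (_ *: _); ring.
  rewrite sqnormZ ler_piMr ?sqr_ge0 //.
set S0 := \sum_(1 <= t < N.+1) a t ^+ 2.
set S1 := \sum_(1 <= t < N.+1) a t.+1 ^+ 2.
set X := \sum_(1 <= t < N.+1) a t * a t.+1.
have sumW : \sum_(1 <= t < N.+1) (gamma * a t.+1 - a t) ^+ 2
    = gamma ^+ 2 * S1 - 2%:R * gamma * X + S0.
  rewrite /S0 /S1 /X !mulr_sumr -sumrB -big_split /=.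
  by apply: eq_bigr => t _; ring.
have sumF : \sum_(1 <= t < N.+1) (a t * (a t - gamma * a t.+1)) = S0 - gamma * X.
  rewrite /S0 /X !mulr_sumr -sumrB.
  by apply: eq_bigr => t _; ring.
have tel : S1 + a 1%N ^+ 2 = S0 + a N.+1 ^+ 2.
  exact: (telesc _ (fun t => a t ^+ 2) N).
have S00 : 0 <= S0 by apply: sumr_ge0 => t _; apply: sqr_ge0.
have gg : gamma ^+ 2 <= 1 by rewrite expr2 mulr_ile1 // ltW.
have kS : 0 <= k * ((1 - gamma ^+ 2) * S0) by apply: mulr_ge0; [exact: ltW | apply: mulr_ge0 => //; rewrite subr_ge0].
have Ms_sym : ((2%:R)^-1 *: (A + A^T))^T = (2%:R)^-1 *: (A + A^T).
  by rewrite linearZ /= linearD /= trmxK addrC.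
have Ray := @rayleigh _ _ _ _ Ms_sym Hmin e.
have eMe : (e^T *m ((2%:R)^-1 *: (A + A^T)) *m e) 0 0 = f_d phi r gamma N traj theta.
  rewrite /f_d -/th -/e -/A; move: (e) => v.
  rewrite -scalemxAr -scalemxAl mulmxDr mulmxDl.
  have -> : v^T *m A^T *m v = v^T *m A *m v.
    transitivity ((v^T *m A *m v)^T); first by rewrite !trmx_mul trmxK mulmxA.
    by apply/matrixP => i j; rewrite !ord1 mxE.
  rewrite -mulr2n -scalerMnr scalerMnl.
  have -> : (2%:R)^-1 *+ 2 = 1 :> R by rewrite -(mulr_natr (2%:R^-1) 2) mulVf // pnatr_eq0.
  by rewrite scale1r.
rewrite eMe in Ray.
have aN : a N.+1 ^+ 2 <= sqnorm e by apply: dot_sq_le.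
rewrite fE in Ray *; rewrite sumF in Ray *.
split.
  apply: (le_trans wE); rewrite sumW /mid fE sumF -/(a N.+1) -/(a 1%N).
  have S1E : S1 = S0 + a N.+1 ^+ 2 - a 1%N ^+ 2 by rewrite -tel; ring.
  rewrite S1E -subr_ge0; apply: (le_trans kS); rewrite le_eqVlt; apply/orP; left; apply/eqP.
  rewrite /k; ring.
rewrite /mid fE sumF; set F := k * (S0 - gamma * X).
have h1 : lamA * a N.+1 ^+ 2 <= F.
  apply: le_trans Ray; apply: ler_wpM2l; [exact: ltW | exact: aN].
have h2 : a N.+1 ^+ 2 <= F / lamA by rewrite ler_pdivlMr // mulrC.
have h3 : gamma ^+ 2 / N%:R * (a N.+1 ^+ 2 - a 1%N ^+ 2) <= gamma ^+ 2 / N%:R * (F / lamA).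
  apply: ler_wpM2l; first by rewrite divr_ge0 ?sqr_ge0 ?ler0n.
  apply: le_trans h2; rewrite lerBlDr lerDl; exact: sqr_ge0.
apply: (@le_trans _ _ (2%:R * F + gamma ^+ 2 / N%:R * (F / lamA))); first by rewrite lerD2l.
rewrite le_eqVlt; apply/orP; left; apply/eqP.
have N0' : (N%:R : R) != 0 by rewrite pnatr_eq0 -lt0n.
have l0 : lamA != 0 by rewrite gt_eqF.
by rewrite invfM; ring.
Qed.
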